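(* Let $(a_n)_{n\in\mathbb Z}$ be a complex sequence with $a_n=0$ for $n<0$ and $a_0=1$, and let $a$ be a nonzero complex number. For integers $k$ and $N\ge 0$ put $v_k(N)=\det\bigl(a_{i+j+k-N}\bigr)_{i,j=0}^{N-1}$. Suppose that $v_2(n)=(-1)^{\binom{n-1}{2}}\,a\,C_{n-1}$ for all $n\ge 1$. Then for all integers $n\ge 0$ and $k\ge 1$, $$v_k(n+k)=(-1)^{\binom{n+1}{2}}\,a^{k-1}\,p_{n+1}(k-1).$$
   Context: $C_n=\frac{1}{n+1}\binom{2n}{n}$ denotes the $n$-th Catalan number. The determinant of a $0\times0$ matrix is $1$. For integers $m,n\ge 0$, $p_m(n)=\prod_{1\le i\le j\le m-1}\frac{2n+i+j}{i+j}$ (empty product $=1$). Note $v_k(N)$ is the determinant of the $N\times N$ Hankel matrix whose first row is $(a_{k-N},a_{k-N+1},\dots,a_{k-1})$. *)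

(* Defs.v *)
From mathcomp Require Import all_boot all_order all_algebra.
From mathcomp Require Import complex.
From mathcomp Require Import reals Rstruct.
Set Implicit Arguments. Unset Strict Implicit. Unset Printing Implicit Defensive.
Import Order.TTheory GRing.Theory Num.Theory.
Local Open Scope ring_scope.

Notation CC := (complex Rdefinitions.R).

Definition catalan (n : nat) : nat := 'C(n.*2, n) %/ n.+1.

Definition pmn (m n : nat) : CC :=
  \prod_(1 <= i < m) \prod_(i <= j < m)
     ((n.*2 + i + j)%:R / (i + j)%:R : CC).

Definition hankel_v (a : int -> CC) (k : int) (N : nat) : CC :=
  \det (\matrix_(i < N, j < N) a ((i : nat)%:Z + (j : nat)%:Z + k - N%:Z)%R).

(* Main.v *)
Require Import Defs.
From mathcomp Require Import all_boot all_order all_algebra.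
From mathcomp Require Import complex reals Rstruct.
From mathcomp Require Import ring lra zify.
Set Implicit Arguments. Unset Strict Implicit. Unset Printing Implicit Defensive.
Import Order.TTheory GRing.Theory Num.Theory.
Local Open Scope ring_scope.

Section DJ.
Variable F : fieldType.

Lemma DJ_adjBM N (M : 'M[F]_N.+2) :
  let A := \adj M in
  let B := \matrix_(i, j) (if i == ord0 then A ord0 j else
             if i == ord_max then A ord_max j else (i == j)%:R) in
  \det (B *m M) = \det M ^+ 2 * \det (row' ord_max (col' ord_max (row' ord0 (col' ord0 M)))).
Proof.
move=> A B.
have hL0 : (ord_max == ord0 :> 'I_N.+2) = false by [].
have hL0' : (ord0 == ord_max :> 'I_N.+2) = false by [].
have hC : forall i j, (B *m M) i j = if i == ord0 then \det M * (ord0 == j)%:R else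
   if i == ord_max then \det M * (ord_max == j)%:R else M i j.
  move=> i j; rewrite !mxE.
  have hA : forall i0, \sum_k A i0 k * M k j = \det M * (i0 == j)%:R.
    move=> i0; have := congr1 (fun X : 'M[F]_N.+2 => X i0 j) (mul_adj_mx M).
    by rewrite !mxE mulr_natr => <-; apply: eq_bigr => k _; rewrite mxE.
  case: ifP => [/eqP->|Hi0].
    by rewrite -hA; apply: eq_bigr => k _; rewrite mxE eqxx.
  case: ifP => [/eqP->|HiL].
    by rewrite -hA; apply: eq_bigr => k _; rewrite mxE eqxx hL0.
  rewrite (bigD1 i) //= !mxE Hi0 HiL eqxx mul1r big1 ?addr0 // => k /negPf Hk.
  by rewrite !mxE Hi0 HiL eq_sym Hk mul0r.
rewrite (expand_det_row _ ord0) (bigD1 ord0) //= big1 ?addr0; last first.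
  move=> k /negPf Hk; rewrite hC eqxx eq_sym Hk mulr0 mul0r.
  done.
rewrite hC eqxx mulr1 /cofactor addn0 expr0 mul1r expr2 -mulrA; congr (_ * _).
set C' := row' _ _.
have hl : lift ord0 (ord_max : 'I_N.+1) = ord_max :> 'I_N.+2 by apply/val_inj.
have hC' : forall i j, C' i j = (B *m M) (lift ord0 i) (lift ord0 j).
  by move=> i j; rewrite /C' [LHS]mxE [LHS]mxE.
rewrite (expand_det_row _ ord_max) (bigD1 ord_max) //= big1 ?addr0; last first.
  move=> k /negPf Hk; rewrite hC' hC /=.
  by rewrite hl eqxx -hl (inj_eq (@lift_inj _ ord0)) eq_sym Hk mulr0 mul0r.
rewrite hC' hC hl hL0 eqxx mulr1 /cofactor -signr_odd oddD addbb expr0 mul1r.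
congr (_ * \det _); apply/matrixP => i j.
rewrite [LHS]mxE [LHS]mxE hC' hC eq_sym (negPf (neq_lift _ _)).
have -> : (lift ord0 (lift ord_max i) == ord_max :> 'I_N.+2) = false.
  by rewrite -hl (inj_eq (@lift_inj _ ord0)) eq_sym (negPf (neq_lift _ _)).
by rewrite !mxE.
Qed.

Lemma DJ_detB N (M : 'M[F]_N.+2) :
  let A := \adj M in
  let B := \matrix_(i, j) (if i == ord0 then A ord0 j else
             if i == ord_max then A ord_max j else (i == j)%:R) in
  \det B = A ord0 ord0 * A ord_max ord_max - A ord_max ord0 * A ord0 ord_max.
Proof.
move=> A B.
have hL0 : (ord_max == ord0 :> 'I_N.+2) = false by [].
have hB : forall i j, B i j = if i == ord0 then A ord0 j else
             if i == ord_max then A ord_max j else (i == j)%:R by move=> i j; rewrite mxE.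
have hl : lift ord0 (ord_max : 'I_N.+1) = ord_max :> 'I_N.+2 by apply/val_inj.
have hn0 : forall i : 'I_N.+1, (lift ord0 i == ord0) = false.
  by move=> i; rewrite eq_sym (negPf (neq_lift _ _)).
rewrite (expand_det_col _ ord0) (bigD1 ord0) //= (bigD1 ord_max) //= big1 ?addr0; last first.
  move=> i /andP [Hi0 HiL]; rewrite hB (negPf Hi0) (negPf HiL).
  by rewrite mul0r.
rewrite !hB eqxx hL0 eqxx.
have -> : cofactor B ord0 ord0 = A ord_max ord_max.
  rewrite /cofactor addn0 expr0 mul1r det_trig; last first.
    apply/is_trig_mxP => i j Hij; rewrite [LHS]mxE [LHS]mxE hB hn0.
    have -> : (lift ord0 i == ord_max :> 'I_N.+2) = false.
      rewrite -hl (inj_eq (@lift_inj _ ord0)); apply/negbTE.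
      by apply: contraTneq Hij => ->; rewrite -leqNgt -ltnS ltn_ord.
    by rewrite (inj_eq (@lift_inj _ ord0)) -val_eqE /= (ltn_eqF Hij).
  rewrite big_ord_recr /= big1 ?mul1r; last first.
    move=> i _; rewrite [LHS]mxE [LHS]mxE hB hn0.
    have -> : (lift ord0 (widen_ord (leqnSn N) i) == ord_max :> 'I_N.+2) = false.
      rewrite -hl (inj_eq (@lift_inj _ ord0)); apply/negbTE.
      by rewrite -val_eqE /= neq_ltn ltn_ord.
    by rewrite eqxx.
  by rewrite [LHS]mxE [LHS]mxE hB hl hL0 eqxx.
set E2 := row' ord_max (col' ord0 B).
have hE2 : forall i j, E2 i j = B (lift ord_max i) (lift ord0 j).
  by move=> i j; rewrite /E2 [LHS]mxE [LHS]mxE.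
have hE2det : \det E2 = (-1) ^+ N * A ord0 ord_max.
  rewrite (expand_det_col _ ord_max) (bigD1 ord0) //= big1 ?addr0; last first.
    move=> i Hi0; rewrite hE2 hl hB.
    have -> : (lift ord_max i == ord0 :> 'I_N.+2) = false.
      apply/negbTE; apply: contra Hi0 => /eqP/(congr1 val) /=.
      move=> hi; apply/eqP/val_inj; move: hi; rewrite /= /bump leqNgt ltn_ord /=; done.
    have -> : (lift ord_max i == ord_max) = false.
      by apply/negP => /eqP h; have := neq_lift ord_max i; rewrite h eqxx.
    by rewrite mul0r.
  rewrite hE2 hl hB.
  have -> : lift ord_max (ord0 : 'I_N.+1) = ord0 :> 'I_N.+2 by apply/val_inj.
  rewrite eqxx /cofactor add0n mulrCA; congr (_ * _).
  rewrite -[RHS]mulr1; congr (_ * _); rewrite -(det1 F N); congr (\det _).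
  apply/matrixP => i j; rewrite [LHS]mxE [LHS]mxE hE2 hB mxE.
  have hv : forall (i : 'I_N), val (lift ord_max (lift ord0 i) : 'I_N.+2) = i.+1.
    by move=> k; rewrite /= /bump leqNgt (ltn_ord (lift ord0 k)) /=.
  have -> : (lift ord_max (lift ord0 i) == ord0 :> 'I_N.+2) = false.
    by rewrite -val_eqE hv.
  have -> : (lift ord_max (lift ord0 i) == ord_max :> 'I_N.+2) = false.
    by rewrite -val_eqE hv /= eqSS; apply/negbTE; rewrite neq_ltn ltn_ord.
  have hv2 : val (lift ord0 (lift ord_max j) : 'I_N.+2) = j.+1.
    exact: (congr1 S (lift_max j)).
  by rewrite mxE -val_eqE hv hv2 /= eqSS.
rewrite /cofactor addn0 hE2det mulrA exprS.
have hs : (-1) ^+ N * (-1) ^+ N = 1 :> F by rewrite -exprD addnn -signr_odd odd_double.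
have H : forall x : F, (-1 * (-1) ^+ N) * ((-1) ^+ N * x) = - x.
  by move=> x; rewrite -mulrA (mulrA ((-1) ^+ N)) hs mul1r mulN1r.
by rewrite -[A ord_max ord0 * _ * _]mulrA H mulrN.
Qed.

Lemma DJ N (M : 'M[F]_N.+2) : \det M != 0 ->
  \det (row' ord0 (col' ord0 M)) * \det (row' ord_max (col' ord_max M))
  - \det (row' ord0 (col' ord_max M)) * \det (row' ord_max (col' ord0 M))
  = \det M * \det (row' ord_max (col' ord_max (row' ord0 (col' ord0 M)))).
Proof.
move=> hd; move: (DJ_adjBM M) (DJ_detB M); cbv zeta => h1 h2.
move: h1; rewrite det_mulmx h2 !mxE /cofactor.
have hs : forall k, (-1) ^+ (k + k) = 1 :> F by move=> k; rewrite -signr_odd oddD addbb.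
rewrite !add0n !addn0 !hs !mul1r.
have -> : forall x y : F, (-1) ^+ (@ord_max N.+1) * x * ((-1) ^+ (@ord_max N.+1) * y) = x * y.
  by move=> x y; rewrite mulrACA -exprD hs mul1r.
move=> h; apply: (mulIf hd); rewrite h expr2; ring.
Qed.
End DJ.

Section Hankel.
Variable a : int -> CC.

Lemma hankel_DJ (k : int) N : hankel_v a k N.+2 != 0 ->
  hankel_v a (k + 1) N.+1 * hankel_v a (k - 1) N.+1 - hankel_v a k N.+1 ^+ 2
  = hankel_v a k N.+2 * hankel_v a k N.
Proof.
move=> hd; have := DJ hd; rewrite /hankel_v expr2.
set M := \matrix_(i, j) _.
have e1 : row' ord0 (col' ord0 M) = \matrix_(i < N.+1, j < N.+1) a ((i : nat)%:Z + (j : nat)%:Z + (k + 1) - N.+1%:Z).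
  apply/matrixP => i j; rewrite !mxE; congr (a _); rewrite !lift0; lia.
have e2 : row' ord_max (col' ord_max M) = \matrix_(i < N.+1, j < N.+1) a ((i : nat)%:Z + (j : nat)%:Z + (k - 1) - N.+1%:Z).
  apply/matrixP => i j; rewrite !mxE; congr (a _); rewrite !lift_max; lia.
have e3 : row' ord0 (col' ord_max M) = \matrix_(i < N.+1, j < N.+1) a ((i : nat)%:Z + (j : nat)%:Z + k - N.+1%:Z).
  apply/matrixP => i j; rewrite !mxE; congr (a _); rewrite lift0 lift_max; lia.
have e4 : row' ord_max (col' ord0 M) = \matrix_(i < N.+1, j < N.+1) a ((i : nat)%:Z + (j : nat)%:Z + k - N.+1%:Z).
  apply/matrixP => i j; rewrite !mxE; congr (a _); rewrite lift0 lift_max; lia.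
have e5 : row' ord_max (col' ord_max (row' ord0 (col' ord0 M))) = \matrix_(i < N, j < N) a ((i : nat)%:Z + (j : nat)%:Z + k - N%:Z).
  apply/matrixP => i j; rewrite !mxE; congr (a _); rewrite !lift0 !lift_max; lia.
by rewrite e5 e1 e2 e3 e4 => ->; rewrite mulrC.
Qed.

Hypothesis ha_neg : forall n : int, n < 0 -> a n = 0.
Hypothesis ha0 : a 0 = 1.

Lemma hankel1 n : hankel_v a 1 n = (-1) ^+ 'C(n, 2).
Proof.
elim: n => [|n IH]; first by rewrite /hankel_v det_mx00.
rewrite /hankel_v (expand_det_row _ ord0) (bigD1 ord_max) //= big1 ?addr0; last first.
  move=> j hj; rewrite mxE ha_neg ?mul0r //.
  have : (j < n)%N by rewrite ltn_neqAle -ltnS ltn_ord andbT; apply: contra hj => /eqP h; apply/eqP/val_inj.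
  move=> hjn; rewrite /=; lia.
rewrite mxE /= /cofactor.
have -> : (0%:Z + n%:Z + 1 - n.+1%:Z) = 0 by lia.
rewrite ha0 mul1r add0n.
have -> : row' ord0 (col' ord_max (\matrix_(i < n.+1, j < n.+1) a ((i : nat)%:Z + (j : nat)%:Z + 1 - n.+1%:Z)))
   = \matrix_(i < n, j < n) a ((i : nat)%:Z + (j : nat)%:Z + 1 - n%:Z).
  apply/matrixP => i j; rewrite !mxE; congr (a _); rewrite lift0 lift_max; lia.
rewrite -/(hankel_v a 1 n) IH binS bin1 exprD mulrC //.
Qed.
End Hankel.

Ltac nzn := try rewrite -[1 : CC]/(1%:R); rewrite -?natrD -?natrM ?pnatr_eq0 -?lt0n ?fact_gt0 ?addn_gt0 ?muln_gt0 ?orbT ?andbT //.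

Definition FF (t : nat) : CC := (t`!)%:R.

Lemma FF_neq0 t : FF t != 0.
Proof. by rewrite /FF pnatr_eq0 -lt0n fact_gt0. Qed.

Lemma FFS t : FF t.+1 = t.+1%:R * FF t.
Proof. by rewrite /FF factS natrM. Qed.

Lemma prod_shift s t : \prod_(1 <= i < t.+1) ((s + i)%:R : CC) * FF s = FF (s + t).
Proof.
elim: t => [|t IH]; first by rewrite big_geq // mul1r addn0.
by rewrite big_nat_recr //= mulrAC IH addnS FFS mulrC.
Qed.

Lemma pmn_succ m x : pmn m.+1 x =
  pmn m x * (FF (x.*2 + m.*2) * FF m / (FF (x.*2 + m) * FF (m.*2))).
Proof.
rewrite /pmn.
have -> : \prod_(1 <= i < m.+1) \prod_(i <= j < m.+1) ((x.*2 + i + j)%:R / (i + j)%:R : CC)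
  = \prod_(1 <= i < m.+1) (\prod_(i <= j < m) ((x.*2 + i + j)%:R / (i + j)%:R : CC)
       * ((x.*2 + i + m)%:R / (i + m)%:R)).
  by apply: eq_big_nat => i /andP [_ hi]; rewrite big_nat_recr.
rewrite big_split /=; congr (_ * _).
  case: m => [|m]; first by rewrite !big_geq.
  by rewrite big_nat_recr //= [X in _ * X]big_geq // mulr1.
rewrite prodf_div.
have h1 := prod_shift (x.*2 + m) m.
have h2 := prod_shift m m.
have -> : \prod_(1 <= i < m.+1) ((x.*2 + i + m)%:R : CC) = \prod_(1 <= i < m.+1) ((x.*2 + m + i)%:R : CC).
  by apply: eq_bigr => i _; rewrite addnAC.
have -> : \prod_(1 <= i < m.+1) ((i + m)%:R : CC) = \prod_(1 <= i < m.+1) ((m + i)%:R : CC).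
  by apply: eq_bigr => i _; rewrite addnC.
have e1 : \prod_(1 <= i < m.+1) ((x.*2 + m + i)%:R : CC) = FF (x.*2 + m.*2) / FF (x.*2 + m).
  by rewrite -addnA addnn in h1; rewrite -h1 mulfK // FF_neq0.
have e2 : \prod_(1 <= i < m.+1) ((m + i)%:R : CC) = FF (m.*2) / FF m.
  by rewrite addnn in h2; rewrite -h2 mulfK // FF_neq0.
rewrite e1 e2; have := FF_neq0 m; have := FF_neq0 (x.*2 + m); have := FF_neq0 (m.*2).
move=> n1 n2 n3; field.
by rewrite n1 n2 n3.
Qed.

Lemma pmn0 x : pmn 0 x = 1.
Proof. by rewrite /pmn big_geq. Qed.

Lemma pmn1 x : pmn 1 x = 1.
Proof. by rewrite /pmn big_geq. Qed.

Lemma pmn_neq0 m x : pmn m x != 0.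
Proof.
elim: m => [|m IH]; first by rewrite pmn0 oner_neq0.
rewrite pmn_succ mulf_neq0 // mulf_neq0 ?mulf_neq0 ?invr_neq0 ?mulf_neq0 ?FF_neq0 //.
Qed.

Lemma pmn_cat m : pmn m 1 = FF (m.*2) / (FF m * FF m.+1).
Proof.
elim: m => [|m IH]; first by rewrite pmn0 /FF /= mulr1 invr1 mulr1.
rewrite pmn_succ IH doubleS.
have -> : (1.*2 + m.*2 = (m.*2).+2)%N by rewrite add2n.
have -> : (1.*2 + m = m.+2)%N by rewrite add2n.
have := FF_neq0 m; have := FF_neq0 m.+1; have := FF_neq0 m.+2;
have := FF_neq0 (m.*2); have := FF_neq0 (m.*2).+2.
move=> n1 n2 n3 n4 n5; field.
by rewrite !pnatr_eq0 -!lt0n !fact_gt0.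
Qed.

Lemma catalanE m : ((catalan m)%:R : CC) = FF (m.*2) / (FF m * FF m.+1).
Proof.
have hC : 'C(m.*2, m) = (m.+1 * ('C(m.*2, m) - 'C(m.*2, m.+1)))%N.
  rewrite mulnBr mul_bin_left -addnn addnK mulSn addnK //.
have hc : catalan m = ('C(m.*2, m) - 'C(m.*2, m.+1))%N by rewrite /catalan {1}hC mulKn.
have hb := @bin_fact (m.*2) m; rewrite -addnn addnK leq_addr in hb.
have hb' : ('C(m.*2, m)%:R * (FF m * FF m) = FF (m.*2) :> CC).
  by rewrite /FF -!natrM -addnn hb.
have hc' : ((catalan m)%:R * (m.+1)%:R = 'C(m.*2, m)%:R :> CC).
  by rewrite hc -natrM mulnC -hC.
rewrite -hb' -hc' FFS.
have := FF_neq0 m; have : (m.+1)%:R != 0 :> CC by rewrite pnatr_eq0.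
move=> n1 n2; field. nzn.
Qed.

Lemma pmnV m y :
  pmn m.+1 y.+2 * pmn m.+1 y * ((y.*2 + m + 2) * (y.*2 + m + 3) * (y.*2 + m + 3) * (y.*2 + m + 4))%:R
  = pmn m.+1 y.+1 ^+ 2 * ((y.*2 + m.*2 + 3) * (y.*2 + m.*2 + 4) * (y.*2 + 2) * (y.*2 + 3))%:R.
Proof.
elim: m => [|m IH].
  rewrite !pmn1 !mul1r expr1n mul1r; congr (_%:R); rewrite double0 addn0; lia.
rewrite !(pmn_succ m.+1).
move: IH (pmn_neq0 m.+1 y) (pmn_neq0 m.+1 y.+1).
move: (pmn m.+1 y) (pmn m.+1 y.+1) (pmn m.+1 y.+2) => p0 p1 p2 IH hp0 hp1.
have hD : ((y.*2 + m + 2) * (y.*2 + m + 3) * (y.*2 + m + 3) * (y.*2 + m + 4))%:R != 0 :> CC by rewrite pnatr_eq0 !muln_eq0; lia.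
have -> : p2 = p1 ^+ 2 * ((y.*2 + m.*2 + 3) * (y.*2 + m.*2 + 4) * (y.*2 + 2) * (y.*2 + 3))%:R / (p0 * ((y.*2 + m + 2) * (y.*2 + m + 3) * (y.*2 + m + 3) * (y.*2 + m + 4))%:R).
  rewrite -IH; field; rewrite hp0 andbT; repeat (apply/andP; split); nzn.
rewrite !doubleS !addSn !addnS !FFS -!addnn.
have := FF_neq0 (y + y + (m + m)); have := FF_neq0 (y + y + m); have := FF_neq0 m; have := FF_neq0 (m + m).
move: (FF (y + y + (m + m))) (FF (y + y + m)) (FF m) (FF (m + m)) => G H K L hL hK hH hG.
field; rewrite hL hH hp0 /= ?andbT; repeat (apply/andP; split); nzn.
Qed.

Lemma pmn_rec m y :
  pmn m.+3 y * pmn m.+1 y.+2 = pmn m.+3 y.+1 * pmn m.+1 y.+1 - pmn m.+2 y.+1 ^+ 2.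
Proof.
have IH := pmnV m y.
rewrite !(pmn_succ m.+2) !(pmn_succ m.+1).
move: IH (pmn_neq0 m.+1 y) (pmn_neq0 m.+1 y.+1).
move: (pmn m.+1 y) (pmn m.+1 y.+1) (pmn m.+1 y.+2) => p0 p1 p2 IH hp0 hp1.
have hD : ((y.*2 + m + 2) * (y.*2 + m + 3) * (y.*2 + m + 3) * (y.*2 + m + 4))%:R != 0 :> CC by rewrite pnatr_eq0 !muln_eq0; lia.
have -> : p2 = p1 ^+ 2 * ((y.*2 + m.*2 + 3) * (y.*2 + m.*2 + 4) * (y.*2 + 2) * (y.*2 + 3))%:R / (p0 * ((y.*2 + m + 2) * (y.*2 + m + 3) * (y.*2 + m + 3) * (y.*2 + m + 4))%:R).
  rewrite -IH; field; rewrite hp0 andbT; repeat (apply/andP; split); nzn.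
rewrite !doubleS !addSn !addnS !FFS -!addnn.
have := FF_neq0 (y + y + (m + m)); have := FF_neq0 (y + y + m); have := FF_neq0 m; have := FF_neq0 (m + m).
move: (FF (y + y + (m + m))) (FF (y + y + m)) (FF m) (FF (m + m)) => G H K L hL hK hH hG.
field; rewrite ?hL ?hH ?hK ?hG ?hp0 ?hp1 /= ?andbT; repeat (apply/andP; split); nzn.
Qed.


Lemma pmn_x0 m : pmn m 0 = 1.
Proof.
rewrite /pmn; apply: big1_seq => i /andP [_]; rewrite mem_index_iota => /andP [hi _].
apply: big1_seq => j /andP [_]; rewrite mem_index_iota => /andP [hj _].
rewrite double0 add0n divff // pnatr_eq0; lia.
Qed.

Lemma sign_sq (b : nat) : ((-1) ^+ b) ^+ 2 = 1 :> CC.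
Proof. by rewrite -exprM mulnC exprM expr2 mulN1r opprK expr1n. Qed.

Lemma sign_shift2 n : (-1) ^+ 'C(n.+3, 2) = - (-1) ^+ 'C(n.+1, 2) :> CC.
Proof.
rewrite (binS n.+2 1) (binS n.+1 1) !bin1 -addnA exprD mulrC.
have -> : (-1) ^+ (n.+1 + n.+2) = -1 :> CC.
  by rewrite -signr_odd addSn addnS addnS /= addnn odd_double.
by rewrite mulN1r.
Qed.

Unset Implicit Arguments.

Theorem lemma5 (a : int -> CC) (c : CC)
  (ha_neg : forall n : int, n < 0 -> a n = 0)
  (ha0 : a 0 = 1)
  (hc : c != 0)
  (hv2 : forall n : nat, (1 <= n)%N ->
     hankel_v a 2 n = (-1) ^+ 'C(n.-1, 2) * c * (catalan n.-1)%:R) :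
  forall n k : nat, (1 <= k)%N ->
    hankel_v a k%:Z (n + k) = (-1) ^+ 'C(n.+1, 2) * c ^+ k.-1 * pmn n.+1 k.-1.
Proof.
pose Q (j : nat) := forall n : nat,
  hankel_v a j%:Z (n + j) = (-1) ^+ 'C(n.+1, 2) * c ^+ j.-1 * pmn n.+1 j.-1.
have Q1 : Q 1%N.
  move=> n; rewrite pmn_x0 expr0 !mulr1 addn1.
  exact: (hankel1 ha_neg ha0 n.+1).
have Q2 : Q 2%N.
  move=> n; have := hv2 (n + 2)%N; rewrite addn2 /= => ->; last by [].
  by rewrite expr1 pmn_cat catalanE.
have Qnz : forall j, Q j.+1 -> forall n, hankel_v a j.+1%:Z (n + j.+1) != 0.
  move=> j hj n; rewrite hj !mulf_neq0 ?expf_neq0 ?pmn_neq0 //.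
  by rewrite oppr_eq0 oner_eq0.
have key : forall k, Q k.+1 /\ Q k.+2.
  elim => [|k [IH1 IH2]]; first by split.
  split => // n.
  have hd := @hankel_DJ a (k.+2)%:Z (n + k.+2)%N.
  have e1 : hankel_v a (k.+2%:Z + 1) (n + k.+2).+1 = hankel_v a k.+3%:Z (n + k.+3).
    by congr (hankel_v a _ _); lia.
  have e2 : hankel_v a (k.+2%:Z - 1) (n + k.+2).+1 = hankel_v a k.+1%:Z (n.+2 + k.+1).
    by congr (hankel_v a _ _); lia.
  have e3 : hankel_v a k.+2%:Z (n + k.+2).+1 = hankel_v a k.+2%:Z (n.+1 + k.+2).
    by congr (hankel_v a _ _); lia.
  have e4 : hankel_v a k.+2%:Z (n + k.+2).+2 = hankel_v a k.+2%:Z (n.+2 + k.+2).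
    by congr (hankel_v a _ _); lia.
  have := hd (Qnz _ IH2 n.+2).
  rewrite e1 e2 e3 IH1 (IH2 n.+2) !IH2 /= => h.
  have hY : (-1) ^+ 'C(n.+3, 2) * c ^+ k * pmn n.+3 k != 0.
    by rewrite !mulf_neq0 ?expf_neq0 ?pmn_neq0 // oppr_eq0 oner_eq0.
  apply: (mulIf hY).
  move: h; set X := hankel_v _ _ _ => h.
  have -> : X * ((-1) ^+ 'C(n.+3, 2) * c ^+ k * pmn n.+3 k) =
     ((-1) ^+ 'C(n.+3, 2) * c ^+ k.+1 * pmn n.+3 k.+1) * ((-1) ^+ 'C(n.+1, 2) * c ^+ k.+1 * pmn n.+1 k.+1)
     + ((-1) ^+ 'C(n.+2, 2) * c ^+ k.+1 * pmn n.+2 k.+1) ^+ 2.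
    by rewrite -h addrNK.
  rewrite sign_shift2.
  have hsq := sign_sq 'C(n.+2, 2).
  have hsq' := sign_sq 'C(n.+1, 2).
  have hr := pmn_rec n k.
  move: hsq hsq' hr.
  move: ((-1) ^+ 'C(n.+2, 2)) ((-1) ^+ 'C(n.+1, 2)) => s1 s0 hs1 hs0.
  move: (pmn n.+3 k) (pmn n.+1 k.+2) (pmn n.+3 k.+1) (pmn n.+1 k.+1) (pmn n.+2 k.+1) => p30 p12 p31 p11 p21 hr.
  rewrite !(exprS c).
  apply/eqP; rewrite -subr_eq0; apply/eqP.
  rewrite [LHS](_ : _ = c ^+ 2 * (c ^+ k) ^+ 2 * (s0 ^+ 2 * (p30 * p12 - (p31 * p11 - p21 ^+ 2)) + p21 ^+ 2 * (s1 ^+ 2 - s0 ^+ 2))); last by ring.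
  by rewrite hr subrr hs1 hs0 subrr !mulr0 addr0 mulr0.
move=> n [|k] // _; exact: (key k).1 n.
Qed.
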